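(* Let $I\subseteq\mathbb{R}$ be an interval, $f:I\to\mathbb{R}$ differentiable on the interior $I^\circ$, and $a,b\in I^\circ$ with $a<b$, $f'\in L[a,b]$. Let $g:[a,b]\to\mathbb{R}$ be continuous and $\alpha>0$. If $|f'|$ is convex on $[a,b]$, then, with $m=\frac{a+b}{2}$, $$\left|f(m)\left[J^{\alpha}_{m-}g(a)+J^{\alpha}_{m+}g(b)\right]-\left[J^{\alpha}_{m-}(fg)(a)+J^{\alpha}_{m+}(fg)(b)\right]\right|\le \frac{(b-a)^{\alpha+1}\,\|g\|_{[a,b],\infty}}{2^{\alpha+1}(\alpha+1)\Gamma(\alpha+1)}\left(|f'(a)|+|f'(b)|\right).$$
   Context: For $\alpha>0$ and an integrable function $h$, the Riemann–Liouville fractional integrals are $J^{\alpha}_{c+}h(x)=\frac{1}{\Gamma(\alpha)}\int_c^x (x-t)^{\alpha-1}h(t)\,dt$ for $x>c$, and $J^{\alpha}_{c-}h(x)=\frac{1}{\Gamma(\alpha)}\int_x^c (t-x)^{\alpha-1}h(t)\,dt$ for $x<c$, where $\Gamma$ is the Gamma function. Thus, with $m=\frac{a+b}{2}$, $J^{\alpha}_{m-}h(a)=\frac{1}{\Gamma(\alpha)}\int_a^{m}(t-a)^{\alpha-1}h(t)\,dt$ and $J^{\alpha}_{m+}h(b)=\frac{1}{\Gamma(\alpha)}\int_{m}^{b}(b-t)^{\alpha-1}h(t)\,dt$. Here $fg$ denotes the pointwise product. For a continuous $g$ and an interval $[c,d]$, $\|g\|_{[c,d],\infty}=\sup_{x\in[c,d]}|g(x)|$.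 *)

(* Defs.v *)
From Stdlib Require Import Reals Lra ClassicalEpsilon.
Open Scope R_scope.

Definition is_RInt (f : R -> R) (a b v : R) : Prop :=
  exists pr : Riemann_integrable f a b, RiemannInt pr = v.

Definition is_Gamma (x v : R) : Prop :=
  forall eps, 0 < eps -> exists delta M0, 0 < delta /\
    forall e M, 0 < e < delta -> M0 < M ->
      exists w, is_RInt (fun t => Rpower t (x - 1) * exp (- t)) e M w /\
                Rabs (w - v) < eps.

Definition Gamma (x : R) : R := epsilon (inhabits 0) (is_Gamma x).

(* \int_x^c (t-x)^(al-1) h(t) dt  (x < c), improper at t = x *)
Definition is_RL_left_int (al : R) (h : R -> R) (c x v : R) : Prop :=
  forall eps, 0 < eps -> exists delta, 0 < delta /\
    forall e, 0 < e < delta ->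
      exists w, is_RInt (fun t => Rpower (t - x) (al - 1) * h t) (x + e) c w /\
                Rabs (w - v) < eps.

(* \int_c^x (x-t)^(al-1) h(t) dt  (c < x), improper at t = x *)
Definition is_RL_right_int (al : R) (h : R -> R) (c x v : R) : Prop :=
  forall eps, 0 < eps -> exists delta, 0 < delta /\
    forall e, 0 < e < delta ->
      exists w, is_RInt (fun t => Rpower (x - t) (al - 1) * h t) c (x - e) w /\
                Rabs (w - v) < eps.

(* Riemann-Liouville fractional integrals J^al_{c-} h (x) and J^al_{c+} h (x) *)
Definition RL_left (al : R) (h : R -> R) (c x : R) : R :=
  / Gamma al * epsilon (inhabits 0) (is_RL_left_int al h c x).

Definition RL_right (al : R) (h : R -> R) (c x : R) : R :=
  / Gamma al * epsilon (inhabits 0) (is_RL_right_int al h c x).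

Definition sup_norm (g : R -> R) (a b : R) : R :=
  epsilon (inhabits 0)
    (is_lub (fun y => exists x, a <= x <= b /\ y = Rabs (g x))).

Definition is_interval (I : R -> Prop) : Prop :=
  forall x y z, I x -> I z -> x <= y <= z -> I y.

Definition convex_on (h : R -> R) (a b : R) : Prop :=
  forall x y t, a <= x <= b -> a <= y <= b -> 0 <= t <= 1 ->
    h (t * x + (1 - t) * y) <= t * h x + (1 - t) * h y.

Definition continuous_on (g : R -> R) (a b : R) : Prop :=
  forall x, a <= x <= b -> continue_in g (fun y => a <= y <= b) x.

(* Main.v *)
Require Import Defs.
From Stdlib Require Import Reals Lra Lia ClassicalEpsilon FunctionalExtensionality.
From Coquelicot Require Import Coquelicot.
Open Scope R_scope.


Ltac rabs := unfold Rabs in *; repeat match goal with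
  | |- context[Rcase_abs ?x] => destruct (Rcase_abs x)
  | H: context[Rcase_abs ?x] |- _ => destruct (Rcase_abs x) end; try lra.

Lemma RInt_conv f a b v : is_RInt f a b v -> Defs.is_RInt f a b v.
Proof.
  intros H. assert (E : ex_RInt f a b) by (exists v; exact H).
  exists (ex_RInt_Reals_0 f a b E). rewrite <- RInt_Reals. now apply is_RInt_unique.
Qed.

Lemma RInt_conv' f a b v : Defs.is_RInt f a b v -> is_RInt f a b v.
Proof.
  intros [pr Hpr]. rewrite <- Hpr, <- (RInt_Reals f a b pr). apply (RInt_correct (V:=R_CompleteNormedModule)).
  apply ex_RInt_Reals_1; exact pr.
Qed.

Lemma Dis_RInt_unique f a b v w : Defs.is_RInt f a b v -> Defs.is_RInt f a b w -> v = w.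
Proof.
  intros H1 H2. apply RInt_conv' in H1. apply RInt_conv' in H2.
  rewrite <- (is_RInt_unique _ _ _ _ H1). now apply is_RInt_unique.
Qed.

Lemma dpl_eq f x l l' : l = l' -> derivable_pt_lim f x l -> derivable_pt_lim f x l'.
Proof. intros ->; auto. Qed.
Lemma dpl_ext f g x l : (forall y, f y = g y) -> derivable_pt_lim f x l -> derivable_pt_lim g x l.
Proof. intros E. replace g with f; auto. apply functional_extensionality; auto. Qed.
Lemma dpl_mult f g x lf lg : derivable_pt_lim f x lf -> derivable_pt_lim g x lg ->
  derivable_pt_lim (fun t => f t * g t) x (lf * g x + f x * lg).
Proof. intros; now apply derivable_pt_lim_mult. Qed.
Lemma dpl_plus f g x lf lg : derivable_pt_lim f x lf -> derivable_pt_lim g x lg ->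
  derivable_pt_lim (fun t => f t + g t) x (lf + lg).
Proof. intros; now apply derivable_pt_lim_plus. Qed.
Lemma dpl_minus f g x lf lg : derivable_pt_lim f x lf -> derivable_pt_lim g x lg ->
  derivable_pt_lim (fun t => f t - g t) x (lf - lg).
Proof. intros; now apply derivable_pt_lim_minus. Qed.
Lemma dpl_opp f x lf : derivable_pt_lim f x lf -> derivable_pt_lim (fun t => - f t) x (- lf).
Proof. intros; now apply derivable_pt_lim_opp. Qed.
Lemma dpl_scal c f x lf : derivable_pt_lim f x lf -> derivable_pt_lim (fun t => c * f t) x (c * lf).
Proof. intros; now apply derivable_pt_lim_scal. Qed.
Lemma dpl_const c x : derivable_pt_lim (fun _ => c) x 0.
Proof. apply derivable_pt_lim_const. Qed.
Lemma dpl_id x : derivable_pt_lim (fun t => t) x 1.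
Proof. apply derivable_pt_lim_id. Qed.
Lemma dpl_comp f g x lf lg : derivable_pt_lim f x lf -> derivable_pt_lim g (f x) lg ->
  derivable_pt_lim (fun t => g (f t)) x (lg * lf).
Proof. intros H1 H2. exact (derivable_pt_lim_comp f g x lf lg H1 H2). Qed.

Lemma dpl_cont f x l : derivable_pt_lim f x l -> continuity_pt f x.
Proof. intros H. apply derivable_continuous_pt. exists l; exact H. Qed.

Lemma der_pow_shift c s t : c < t ->
  derivable_pt_lim (fun x => Rpower (x - c) s) t (s * Rpower (t - c) (s - 1)).
Proof.
  intros H. apply dpl_eq with (s * Rpower (t - c) (s - 1) * (1 - 0)); [ring|].
  apply dpl_comp with (f := fun x => x - c) (g := fun y => Rpower y s).
  apply dpl_minus; [apply dpl_id|apply dpl_const].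
  apply derivable_pt_lim_power; lra.
Qed.

Lemma der_pow_refl c s t : t < c ->
  derivable_pt_lim (fun x => Rpower (c - x) s) t (- (s * Rpower (c - t) (s - 1))).
Proof.
  intros H. apply dpl_eq with (s * Rpower (c - t) (s - 1) * (0 - 1)); [ring|].
  apply dpl_comp with (f := fun x => c - x) (g := fun y => Rpower y s).
  apply dpl_minus; [apply dpl_const|apply dpl_id].
  apply derivable_pt_lim_power; lra.
Qed.

Lemma cont_pow_shift c s t : c < t -> continuity_pt (fun x => Rpower (x - c) s) t.
Proof. intros H. eapply dpl_cont. apply der_pow_shift; auto. Qed.

Lemma cont_pow_refl c s t : t < c -> continuity_pt (fun x => Rpower (c - x) s) t.
Proof. intros H. eapply dpl_cont. apply der_pow_refl; auto. Qed.

Lemma is_RInt_derive' f df a b :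
  (forall x, Rmin a b <= x <= Rmax a b -> derivable_pt_lim f x (df x)) ->
  (forall x, Rmin a b <= x <= Rmax a b -> continuity_pt df x) ->
  is_RInt df a b (f b - f a).
Proof.
  intros H1 H2. apply (is_RInt_derive f df a b).
  - intros x Hx. apply is_derive_Reals. auto.
  - intros x Hx. apply continuity_pt_filterlim. auto.
Qed.

Lemma Rpower_pos x y : 0 < Rpower x y.
Proof. unfold Rpower. apply exp_pos. Qed.

Lemma IntL c s u v : 0 < s -> c < u -> u <= v ->
  is_RInt (fun t => Rpower (t - c) (s - 1)) u v ((Rpower (v - c) s - Rpower (u - c) s) / s).
Proof.
  intros Hs Hu Hv.
  replace ((Rpower (v - c) s - Rpower (u - c) s) / s) with
    ((/s * Rpower (v - c) s) - (/s * Rpower (u - c) s)) by (field; lra).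
  apply is_RInt_derive' with (f := fun t => /s * Rpower (t - c) s).
  - intros x Hx. rewrite Rmin_left in Hx by lra. rewrite Rmax_right in Hx by lra.
    apply dpl_eq with (/s * (s * Rpower (x - c) (s - 1))); [field; lra|].
    apply dpl_scal. apply der_pow_shift. lra.
  - intros x Hx. rewrite Rmin_left in Hx by lra. rewrite Rmax_right in Hx by lra.
    apply cont_pow_shift. lra.
Qed.

Lemma IntR c s u v : 0 < s -> v < c -> u <= v ->
  is_RInt (fun t => Rpower (c - t) (s - 1)) u v ((Rpower (c - u) s - Rpower (c - v) s) / s).
Proof.
  intros Hs Hu Hv.
  replace ((Rpower (c - u) s - Rpower (c - v) s) / s) with
    ((- /s * Rpower (c - v) s) - (- /s * Rpower (c - u) s)) by (field; lra).
  apply is_RInt_derive' with (f := fun t => - /s * Rpower (c - t) s).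
  - intros x Hx. rewrite Rmin_left in Hx by lra. rewrite Rmax_right in Hx by lra.
    apply dpl_eq with (- /s * (- (s * Rpower (c - x) (s - 1)))); [field; lra|].
    apply dpl_scal. apply der_pow_refl. lra.
  - intros x Hx. rewrite Rmin_left in Hx by lra. rewrite Rmax_right in Hx by lra.
    apply cont_pow_refl. lra.
Qed.

Lemma abs_is_RInt_le f g u v I J : u <= v -> is_RInt f u v I -> is_RInt g u v J ->
  (forall x, u < x < v -> Rabs (f x) <= g x) -> Rabs I <= J.
Proof.
  intros Huv Hf Hg H.
  assert (H1 : I <= J).
  { apply (is_RInt_le f g u v I J Huv Hf Hg). intros x Hx. specialize (H x Hx). rabs. }
  assert (H2 : - J <= I).
  { apply (is_RInt_le (fun y => opp (g y)) f u v (opp J) I Huv); auto.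
    apply is_RInt_opp; auto. intros x Hx. specialize (H x Hx). change (opp (g x)) with (- g x). rabs. }
  rabs.
Qed.

Lemma small_pow s eps : 0 < s -> 0 < eps ->
  exists d, 0 < d /\ forall y, 0 < y < d -> Rpower y s < eps.
Proof.
  intros Hs He. exists (Rpower eps (/s)). split. apply Rpower_pos.
  intros y Hy. assert (E : Rpower (Rpower eps (/s)) s = eps).
  { rewrite Rpower_mult. replace (/s * s) with 1 by (field; lra). apply Rpower_1; lra. }
  apply Rlt_le_trans with (Rpower (Rpower eps (/s)) s). apply Rlt_Rpower_l; lra. lra.
Qed.


Definition lim0 (F : R -> R) (v : R) := forall eps, 0 < eps ->
  exists d, 0 < d /\ forall e, 0 < e < d -> Rabs (F e - v) < eps.

Lemma inv_small N n d : (0 < N)%nat -> / INR N < d -> (N <= n)%nat -> 0 < / (INR n + 1) < d.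
Proof.
  intros HN Hd Hn. assert (H1 : 0 < INR N) by (apply lt_0_INR; lia).
  assert (H2 : INR N <= INR n) by (apply le_INR; auto).
  split. apply Rinv_0_lt_compat. lra.
  apply Rlt_trans with (/ INR N); auto. apply Rinv_lt_contravar. nra. lra.
Qed.

Lemma cauchy_lim (F : R -> R) :
  (forall eps, 0 < eps -> exists delta, 0 < delta /\ forall e1 e2, 0 < e1 < delta -> 0 < e2 < delta ->
      Rabs (F e1 - F e2) < eps) -> exists v, lim0 F v.
Proof.
  intros HC. set (u := fun n : nat => F (/ (INR n + 1))).
  assert (Cu : Cauchy_crit u).
  { intros eps He. destruct (HC eps He) as [d [Hd H]].
    destruct (archimed_cor1 d Hd) as [N [HN HN0]].
    exists N. intros n m Hn Hm. unfold R_dist, u. apply H; eapply inv_small; eauto. }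
  destruct (Rcomplete.R_complete u Cu) as [v Hv]. exists v.
  intros eps He. destruct (HC (eps/2)) as [d [Hd H]]. lra.
  exists d; split; auto. intros e He'.
  destruct (Hv (eps/2)) as [N1 HN1]. lra.
  destruct (archimed_cor1 d Hd) as [N2 [HN2 HN2p]].
  assert (Hn := inv_small N2 (N1 + N2) d HN2p HN2 ltac:(lia)).
  specialize (HN1 (N1 + N2)%nat ltac:(lia)). unfold R_dist, u in HN1.
  specialize (H e _ He' Hn). rabs.
Qed.

Lemma lim0_unique F v1 v2 : lim0 F v1 -> lim0 F v2 -> v1 = v2.
Proof.
  intros H1 H2. destruct (Req_dec v1 v2) as [E|E]; auto. exfalso.
  assert (Hp : 0 < Rabs (v1 - v2) / 2) by (assert (0 < Rabs (v1 - v2)) by (apply Rabs_pos_lt; lra); lra).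
  destruct (H1 _ Hp) as [d1 [Hd1 K1]]. destruct (H2 _ Hp) as [d2 [Hd2 K2]].
  set (e := Rmin d1 d2 / 2).
  assert (A3 := Rmin_l d1 d2). assert (A4 := Rmin_r d1 d2).
  assert (A5 : 0 < Rmin d1 d2) by (apply Rmin_pos; auto).
  assert (He1 : 0 < e < d1) by (unfold e; lra).
  assert (He2 : 0 < e < d2) by (unfold e; lra).
  specialize (K1 e He1). specialize (K2 e He2). rabs.
Qed.

Lemma lim0_le p q P Q d0 : 0 < d0 -> (forall e, 0 < e < d0 -> Rabs (p e) <= q e) ->
  lim0 p P -> lim0 q Q -> Rabs P <= Q.
Proof.
  intros Hd0 H HP HQ. apply Rnot_lt_le. intros Hlt.
  assert (Hp : 0 < (Rabs P - Q) / 3) by lra.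
  destruct (HP _ Hp) as [d1 [Hd1 K1]]. destruct (HQ _ Hp) as [d2 [Hd2 K2]].
  set (e := Rmin d0 (Rmin d1 d2) / 2).
  assert (A1 := Rmin_l d0 (Rmin d1 d2)). assert (A2 := Rmin_r d0 (Rmin d1 d2)).
  assert (A3 := Rmin_l d1 d2). assert (A4 := Rmin_r d1 d2).
  assert (A5 : 0 < Rmin d0 (Rmin d1 d2)) by (repeat apply Rmin_pos; auto).
  assert (He0 : 0 < e < d0) by (unfold e; lra).
  assert (He1 : 0 < e < d1) by (unfold e; lra).
  assert (He2 : 0 < e < d2) by (unfold e; lra).
  specialize (K1 e He1). specialize (K2 e He2). specialize (H e He0). rabs.
Qed.

Lemma lim0_plus F G v w : lim0 F v -> lim0 G w -> lim0 (fun e => F e + G e) (v + w).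
Proof.
  intros H1 H2 eps He. destruct (H1 (eps/2)) as [d1 [Hd1 K1]]; [lra|].
  destruct (H2 (eps/2)) as [d2 [Hd2 K2]]; [lra|].
  exists (Rmin d1 d2). split. apply Rmin_pos; auto.
  intros e He'. assert (A3 := Rmin_l d1 d2). assert (A4 := Rmin_r d1 d2).
  specialize (K1 e ltac:(lra)). specialize (K2 e ltac:(lra)). rabs.
Qed.

Lemma lim0_scal c F v : lim0 F v -> lim0 (fun e => c * F e) (c * v).
Proof.
  intros H eps He. destruct (H (eps / (Rabs c + 1))) as [d [Hd K]].
  { apply Rdiv_lt_0_compat; auto. assert (0 <= Rabs c) by apply Rabs_pos. lra. }
  exists d; split; auto. intros e He'. specialize (K e He').
  replace (c * F e - c * v) with (c * (F e - v)) by ring. rewrite Rabs_mult.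
  assert (0 <= Rabs c) by apply Rabs_pos.
  apply Rle_lt_trans with (Rabs c * (eps / (Rabs c + 1))).
  apply Rmult_le_compat_l; lra.
  replace (Rabs c * (eps / (Rabs c + 1))) with (eps * (Rabs c / (Rabs c + 1))) by (field; lra).
  assert (Rabs c / (Rabs c + 1) < 1). { apply (Rmult_lt_reg_r (Rabs c + 1)). lra. field_simplify; lra. }
  nra.
Qed.

Lemma lim0_const c : lim0 (fun _ => c) c.
Proof. intros eps He. exists 1. split. lra. intros. replace (c - c) with 0 by ring. rewrite Rabs_R0; lra. Qed.

Lemma lim0_ext F G v : (forall e, F e = G e) -> lim0 F v -> lim0 G v.
Proof. intros E H. replace G with F; auto. apply functional_extensionality; auto. Qed.

Lemma lim0_pow s : 0 < s -> lim0 (fun e => Rpower e s) 0.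
Proof.
  intros Hs eps He. destruct (small_pow s eps Hs He) as [d [Hd K]]. exists d; split; auto.
  intros e He'. specialize (K e He'). assert (0 < Rpower e s) by apply Rpower_pos.
  rewrite Rminus_0_r, Rabs_right; lra.
Qed.

Definition clamp (a b t : R) := Rmax a (Rmin b t).

Lemma clamp_in a b t : a <= b -> a <= clamp a b t <= b.
Proof. intros H. unfold clamp, Rmax, Rmin. repeat destruct Rle_dec; lra. Qed.

Lemma clamp_id a b t : a <= t <= b -> clamp a b t = t.
Proof. intros H. unfold clamp, Rmax, Rmin. repeat destruct Rle_dec; lra. Qed.

Lemma clamp_lip a b x y : a <= b -> Rabs (clamp a b x - clamp a b y) <= Rabs (x - y).
Proof. intros H. unfold clamp, Rmax, Rmin. repeat destruct Rle_dec; rabs. Qed.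

Lemma clamp_cont h a b : a <= b -> Defs.continuous_on h a b ->
  forall t, continuity_pt (fun x => h (clamp a b x)) t.
Proof.
  intros Hab Hc t eps Heps.
  destruct (Hc (clamp a b t) (clamp_in a b t Hab) eps Heps) as [alp [Halp H]].
  exists alp; split; auto. intros x [_ Hx]. simpl in *. unfold R_dist in *.
  destruct (Req_dec (clamp a b x) (clamp a b t)) as [E|E].
  - rewrite E. replace (h (clamp a b t) - h (clamp a b t)) with 0 by ring. rewrite Rabs_R0; lra.
  - apply H. split. split. apply clamp_in; auto. auto.
    simpl. unfold R_dist. eapply Rle_lt_trans. apply clamp_lip; auto. auto.
Qed.

Lemma cont_pt_on h a b : (forall x, a <= x <= b -> continuity_pt h x) -> Defs.continuous_on h a b.
Proof.
  intros H x Hx eps He. destruct (H x Hx eps He) as [alp [Ha K]]. exists alp; split; auto.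
  intros y [[Dy Hne] Hd]. apply K. split; auto. split; auto. exact I.
Qed.

Lemma interior_between I a b x : is_interval I -> interior I a -> interior I b -> a <= x <= b ->
  interior I x.
Proof.
  intros HI [d1 H1] [d2 H2] Hx.
  assert (Hd : 0 < Rmin d1 d2 / 2) by (assert (0 < Rmin d1 d2) by (apply Rmin_pos; apply cond_pos); lra).
  exists (mkposreal _ Hd). intros y Hy. unfold disc in Hy. simpl in Hy.
  assert (A1 := Rmin_l d1 d2). assert (A2 := Rmin_r d1 d2).
  assert (P1 := cond_pos d1). assert (P2 := cond_pos d2).
  apply HI with (a - d1/2) (b + d2/2).
  - apply H1. unfold disc. rabs.
  - apply H2. unfold disc. rabs.
  - rabs.
Qed.

Lemma sup_norm_bound g a b G : a <= b -> (forall t, continuity_pt G t) ->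
  (forall t, a <= t <= b -> g t = G t) -> forall t, a <= t <= b -> Rabs (g t) <= sup_norm g a b.
Proof.
  intros Hab HG Hg t Ht.
  set (E := fun y => exists x, a <= x <= b /\ y = Rabs (g x)).
  assert (Hex : exists m, is_lub E m).
  { destruct (continuity_ab_maj (fun t => Rabs (G t)) a b Hab) as [Mx [HM _]].
    { intros c _. apply (continuity_pt_comp G Rabs). auto. apply Rcontinuity_abs. }
    destruct (completeness E) as [m Hm].
    - exists (Rabs (G Mx)). intros y [x [Hx ->]]. rewrite Hg; auto.
    - exists (Rabs (g a)). exists a; split; auto; lra.
    - exists m; auto. }
  assert (Hs := epsilon_spec (inhabits 0) _ Hex). fold (sup_norm g a b) in Hs.
  destruct Hs as [Hub _]. apply Hub. exists t; auto.
Qed.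


Lemma exRInt_cont f u v : u <= v -> (forall z, u <= z <= v -> continuity_pt f z) -> ex_RInt f u v.
Proof.
  intros Huv H. apply (ex_RInt_continuous (V:=R_CompleteNormedModule)). intros z Hz.
  rewrite Rmin_left, Rmax_right in Hz by lra. apply continuity_pt_filterlim. auto.
Qed.

Lemma cmult f g x : continuity_pt f x -> continuity_pt g x -> continuity_pt (fun t => f t * g t) x.
Proof. intros H1 H2. exact (continuity_pt_mult f g x H1 H2). Qed.

Lemma exL al a m H h0 e : (forall t, continuity_pt H t) -> (forall t, a <= t <= m -> h0 t = H t) ->
  0 < e -> a + e <= m -> ex_RInt (fun t => Rpower (t - a) (al - 1) * h0 t) (a + e) m.
Proof.
  intros HH Hh He Hm. apply ex_RInt_ext with (fun t => Rpower (t - a) (al - 1) * H t).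
  - intros x Hx. rewrite Rmin_left, Rmax_right in Hx by lra. rewrite Hh by lra. auto.
  - apply exRInt_cont; auto. intros z Hz. apply cmult; auto. apply cont_pow_shift; lra.
Qed.

Lemma cauchy_of_bound F C s d0 : 0 <= C -> 0 < s -> 0 < d0 ->
  (forall e1 e2, 0 < e1 <= e2 -> e2 < d0 -> Rabs (F e1 - F e2) <= C * Rpower e2 s) ->
  forall eps, 0 < eps -> exists delta, 0 < delta /\ forall e1 e2, 0 < e1 < delta -> 0 < e2 < delta ->
      Rabs (F e1 - F e2) < eps.
Proof.
  intros HC Hs Hd0 HB eps He.
  assert (He' : 0 < eps / (C + 1)) by (apply Rdiv_lt_0_compat; lra).
  destruct (small_pow s _ Hs He') as [d [Hd K]].
  exists (Rmin d d0). split. apply Rmin_pos; auto.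
  assert (A1 := Rmin_l d d0). assert (A2 := Rmin_r d d0).
  assert (Key : forall y, 0 < y < Rmin d d0 -> C * Rpower y s < eps).
  { intros y Hy. specialize (K y ltac:(lra)). assert (0 < Rpower y s) by apply Rpower_pos.
    apply Rle_lt_trans with ((C + 1) * Rpower y s). nra.
    replace eps with ((C + 1) * (eps / (C + 1))) by (field; lra).
    apply Rmult_lt_compat_l; lra. }
  intros e1 e2 H1 H2. destruct (Rle_dec e1 e2).
  - eapply Rle_lt_trans. apply HB; lra. apply Key; lra.
  - rewrite Rabs_minus_sym. eapply Rle_lt_trans. apply HB; lra. apply Key; lra.
Qed.

Lemma RLL_exists al a m H h0 : 0 < al -> a < m -> (forall t, continuity_pt H t) ->
  (forall t, a <= t <= m -> h0 t = H t) ->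
  exists V, lim0 (fun e => RInt (fun t => Rpower (t - a) (al - 1) * h0 t) (a + e) m) V.
Proof.
  intros Hal Ham HH Hh. apply cauchy_lim.
  destruct (continuity_ab_maj (fun t => Rabs (H t)) a m) as [Mx [HM HMx]]; [lra| |].
  { intros c _. apply (continuity_pt_comp H Rabs). auto. apply Rcontinuity_abs. }
  set (K := Rabs (H Mx)). assert (HK : 0 <= K) by apply Rabs_pos.
  apply cauchy_of_bound with (K / al) al (m - a); auto.
  { apply Rdiv_le_0_compat; lra. } lra.
  intros e1 e2 He He2.
  set (phi := fun t => Rpower (t - a) (al - 1) * h0 t).
  assert (E1 : ex_RInt phi (a + e1) m) by (apply exL with H; auto; lra).
  assert (E2 : ex_RInt phi (a + e2) m) by (apply exL with H; auto; lra).
  assert (E12 : ex_RInt phi (a + e1) (a + e2)) by (apply (ex_RInt_Chasles_1 phi _ _ m); auto; lra).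
  rewrite <- (RInt_Chasles phi (a + e1) (a + e2) m E12 E2).
  change (plus (RInt phi (a + e1) (a + e2)) (RInt phi (a + e2) m)) with
    (RInt phi (a + e1) (a + e2) + RInt phi (a + e2) m).
  assert (Hr : forall r1 r2 : R, r1 + r2 - r2 = r1) by (intros; ring). rewrite Hr.
  assert (J := is_RInt_scal _ _ _ K _ (IntL a al (a + e1) (a + e2) Hal ltac:(lra) ltac:(lra))).
  eapply Rle_trans.
  apply (abs_is_RInt_le phi _ (a + e1) (a + e2) _ _ ltac:(lra) (RInt_correct _ _ _ E12) J).
  - intros x Hx. unfold phi. change (scal K (Rpower (x - a) (al - 1))) with (K * Rpower (x - a) (al - 1)).
    rewrite Rabs_mult. rewrite (Rabs_right (Rpower _ _)) by (left; apply Rpower_pos).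
    rewrite Hh by lra. rewrite Rmult_comm. apply Rmult_le_compat_r. left; apply Rpower_pos.
    apply HM; lra.
  - change (scal K ((Rpower (a + e2 - a) al - Rpower (a + e1 - a) al) / al)) with
      (K * ((Rpower (a + e2 - a) al - Rpower (a + e1 - a) al) / al)).
    replace (a + e2 - a) with e2 by ring. replace (a + e1 - a) with e1 by ring.
    assert (0 < Rpower e1 al) by apply Rpower_pos.
    unfold Rdiv. rewrite (Rmult_comm K (/ al)), Rmult_assoc.
    replace (K * ((Rpower e2 al - Rpower e1 al) * / al)) with (/ al * (K * (Rpower e2 al - Rpower e1 al))) by ring.
    apply Rmult_le_compat_l. left; apply Rinv_0_lt_compat; lra. nra.
Qed.

Lemma RLL_of_lim al a m h0 V : a < m ->
  (forall e, 0 < e < m - a -> ex_RInt (fun t => Rpower (t - a) (al - 1) * h0 t) (a + e) m) ->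
  lim0 (fun e => RInt (fun t => Rpower (t - a) (al - 1) * h0 t) (a + e) m) V ->
  is_RL_left_int al h0 m a V.
Proof.
  intros Ham Hex HV eps He. destruct (HV eps He) as [d [Hd K]].
  exists (Rmin d (m - a)). split. apply Rmin_pos; lra.
  assert (A1 := Rmin_l d (m - a)). assert (A2 := Rmin_r d (m - a)).
  intros e He'. exists (RInt (fun t => Rpower (t - a) (al - 1) * h0 t) (a + e) m). split. apply RInt_conv. apply (RInt_correct (V:=R_CompleteNormedModule)). apply Hex; lra.
  apply K; lra.
Qed.

Lemma RLL_unique al h c x v1 v2 : is_RL_left_int al h c x v1 -> is_RL_left_int al h c x v2 -> v1 = v2.
Proof.
  intros H1 H2. destruct (Req_dec v1 v2) as [E|E]; auto. exfalso.
  assert (Hp : 0 < Rabs (v1 - v2) / 2) by (assert (0 < Rabs (v1 - v2)) by (apply Rabs_pos_lt; lra); lra).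
  destruct (H1 _ Hp) as [d1 [Hd1 K1]]. destruct (H2 _ Hp) as [d2 [Hd2 K2]].
  set (e := Rmin d1 d2 / 2).
  assert (A3 := Rmin_l d1 d2). assert (A4 := Rmin_r d1 d2).
  assert (A5 : 0 < Rmin d1 d2) by (apply Rmin_pos; auto).
  destruct (K1 e ltac:(unfold e; lra)) as [w1 [Hw1 L1]].
  destruct (K2 e ltac:(unfold e; lra)) as [w2 [Hw2 L2]].
  rewrite (Dis_RInt_unique _ _ _ _ _ Hw1 Hw2) in L1. rabs.
Qed.

Lemma RLR_unique al h c x v1 v2 : is_RL_right_int al h c x v1 -> is_RL_right_int al h c x v2 -> v1 = v2.
Proof.
  intros H1 H2. destruct (Req_dec v1 v2) as [E|E]; auto. exfalso.
  assert (Hp : 0 < Rabs (v1 - v2) / 2) by (assert (0 < Rabs (v1 - v2)) by (apply Rabs_pos_lt; lra); lra).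
  destruct (H1 _ Hp) as [d1 [Hd1 K1]]. destruct (H2 _ Hp) as [d2 [Hd2 K2]].
  set (e := Rmin d1 d2 / 2).
  assert (A3 := Rmin_l d1 d2). assert (A4 := Rmin_r d1 d2).
  assert (A5 : 0 < Rmin d1 d2) by (apply Rmin_pos; auto).
  destruct (K1 e ltac:(unfold e; lra)) as [w1 [Hw1 L1]].
  destruct (K2 e ltac:(unfold e; lra)) as [w2 [Hw2 L2]].
  rewrite (Dis_RInt_unique _ _ _ _ _ Hw1 Hw2) in L1. rabs.
Qed.

Lemma RL_left_val al h c x v : is_RL_left_int al h c x v -> RL_left al h c x = / Gamma al * v.
Proof.
  intros H. unfold RL_left. f_equal. apply RLL_unique with al h c x; auto.
  apply epsilon_spec. exists v; auto.
Qed.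

Lemma RL_right_val al h c x v : is_RL_right_int al h c x v -> RL_right al h c x = / Gamma al * v.
Proof.
  intros H. unfold RL_right. f_equal. apply RLR_unique with al h c x; auto.
  apply epsilon_spec. exists v; auto.
Qed.

Lemma refl_RL al h a b v : a < b ->
  is_RL_left_int al (fun t => h (a + b - t)) ((a + b) / 2) a v -> is_RL_right_int al h ((a + b) / 2) b v.
Proof.
  intros Hab H eps He. destruct (H eps He) as [d [Hd H']]. exists d. split; auto.
  intros e He'. destruct (H' e He') as [w [Hw Hwv]]. exists w. split; auto.
  apply RInt_conv. apply RInt_conv' in Hw.
  set (m := (a + b) / 2) in *.
  set (L := fun t => Rpower (t - a) (al - 1) * h (a + b - t)) in *.
  assert (H1 := is_RInt_swap _ _ _ _ Hw).
  assert (H2 := is_RInt_comp_lin L (-1) (a + b) m (b - e) (opp w)).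
  assert (Em : -1 * m + (a + b) = m) by (unfold m; field). rewrite Em in H2.
  assert (Ee : -1 * (b - e) + (a + b) = a + e) by ring. rewrite Ee in H2.
  specialize (H2 H1). apply is_RInt_opp in H2.
  change (opp (opp w)) with (- - w) in H2. rewrite Ropp_involutive in H2.
  apply (is_RInt_ext _ _ _ _ _ (fun x _ => eq_refl) ) in H2.
  eapply is_RInt_ext; [|exact H2].
  intros x _. unfold L. change (opp (scal (-1) (Rpower (-1 * x + (a + b) - a) (al - 1) * h (a + b - (-1 * x + (a + b))))))
    with (- (-1 * (Rpower (-1 * x + (a + b) - a) (al - 1) * h (a + b - (-1 * x + (a + b)))))).
  replace (-1 * x + (a + b) - a) with (b - x) by ring.
  replace (a + b - (-1 * x + (a + b))) with x by ring.
  assert (Hq : forall u v : R, - (-1 * (u * v)) = u * v) by (intros; ring). apply Hq.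
Qed.


Definition Pf (A B h a t : R) :=
  (3 * A + B) * h / 4 + (- A) * (t - a) + (A - B) / (4 * h) * ((t - a) * (t - a)).

Lemma PBound a b f df A B y :
  a < b ->
  (forall x, a <= x <= b -> derivable_pt_lim f x (df x)) ->
  (forall s, a <= s <= b -> Rabs (df s) <= ((b - s) * A + (s - a) * B) / (b - a)) ->
  a <= y <= (a + b) / 2 ->
  Rabs (f ((a + b) / 2) - f y) <= Pf A B ((b - a) / 2) a y.
Proof.
  intros Hab Hf Hd Hy. set (m := (a + b) / 2) in *. set (h := (b - a) / 2).
  assert (Hh : 0 < h) by (unfold h; lra).
  assert (HPm : Pf A B h a m = 0) by (unfold Pf, m, h; field; lra).
  assert (DP : forall t, derivable_pt_lim (Pf A B h a) t (- A + 2 * ((A - B) / (4 * h)) * (t - a))).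
  { intros t. unfold Pf. apply is_derive_Reals. auto_derive. auto. ring. }
  assert (Hl : forall c, - A + 2 * ((A - B) / (4 * h)) * (c - a) = - (((b - c) * A + (c - a) * B) / (b - a))).
  { intros c. unfold h. field. lra. }
  destruct (Req_dec y m) as [E|E].
  { subst y. replace (f m - f m) with 0 by ring. rewrite HPm, Rabs_R0. lra. }
  assert (Hym : y < m) by lra.
  assert (U : 0 <= Pf A B h a y - (f m - f y)).
  { destruct (MVT_cor2 (fun t => Pf A B h a t - (f m - f t))
       (fun t => (- A + 2 * ((A - B) / (4 * h)) * (t - a)) - (0 - df t)) y m Hym) as [c [Hc1 Hc2]].
    - intros c Hc. apply dpl_minus. apply DP. apply dpl_minus. apply dpl_const. apply Hf. unfold m in *; lra.
    - rewrite HPm in Hc1. replace (f m - f m) with 0 in Hc1 by ring.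
      rewrite Hl in Hc1. assert (Hdc := Hd c ltac:(unfold m in *; lra)).
      assert (df c <= ((b - c) * A + (c - a) * B) / (b - a)) by rabs.
      nra. }
  assert (V : 0 <= Pf A B h a y + (f m - f y)).
  { destruct (MVT_cor2 (fun t => Pf A B h a t + (f m - f t))
       (fun t => (- A + 2 * ((A - B) / (4 * h)) * (t - a)) + (0 - df t)) y m Hym) as [c [Hc1 Hc2]].
    - intros c Hc. apply dpl_plus. apply DP. apply dpl_minus. apply dpl_const. apply Hf. unfold m in *; lra.
    - rewrite HPm in Hc1. replace (f m - f m) with 0 in Hc1 by ring.
      rewrite Hl in Hc1. assert (Hdc := Hd c ltac:(unfold m in *; lra)).
      assert (- df c <= ((b - c) * A + (c - a) * B) / (b - a)) by rabs.
      nra. }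
  rabs.
Qed.


Definition FL (al A B h u : R) :=
  ((3 * A + B) * h / 4) * (Rpower u al / al) + (- A) * (Rpower u (al + 1) / (al + 1))
  + ((A - B) / (4 * h)) * (Rpower u (al + 2) / (al + 2)).

Lemma Rpower_sh1 u s : 0 < u -> Rpower u (s + 1 - 1) = Rpower u (s - 1) * u.
Proof. intros H. replace (s + 1 - 1) with ((s - 1) + 1) by ring. rewrite Rpower_plus, Rpower_1; auto. Qed.
Lemma Rpower_sh2 u s : 0 < u -> Rpower u (s + 2 - 1) = Rpower u (s - 1) * u * u.
Proof. intros H. replace (s + 2 - 1) with ((s - 1) + 1 + 1) by ring. rewrite !Rpower_plus, Rpower_1; auto. Qed.

Lemma TruncBound al a b f df g K A B e :
  0 < al -> a < b ->
  (forall x, a <= x <= b -> derivable_pt_lim f x (df x)) ->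
  (forall s, a <= s <= b -> Rabs (df s) <= ((b - s) * A + (s - a) * B) / (b - a)) ->
  (forall t, a <= t <= b -> Rabs (g t) <= K) ->
  0 < e < (b - a) / 2 ->
  ex_RInt (fun t => Rpower (t - a) (al - 1) * g t) (a + e) ((a + b) / 2) ->
  ex_RInt (fun t => Rpower (t - a) (al - 1) * (f t * g t)) (a + e) ((a + b) / 2) ->
  Rabs (f ((a + b) / 2) * RInt (fun t => Rpower (t - a) (al - 1) * g t) (a + e) ((a + b) / 2)
        - RInt (fun t => Rpower (t - a) (al - 1) * (f t * g t)) (a + e) ((a + b) / 2))
  <= K * (FL al A B ((b - a) / 2) ((b - a) / 2) - FL al A B ((b - a) / 2) e).
Proof.
  intros Hal Hab Hf Hd HK He Eg Efg.
  set (m := (a + b) / 2) in *. set (h := (b - a) / 2) in *.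
  assert (Hh : 0 < h) by (unfold h; lra). assert (Hmh : m - a = h) by (unfold m, h; field).
  set (phig := fun t => Rpower (t - a) (al - 1) * g t) in *.
  set (phifg := fun t => Rpower (t - a) (al - 1) * (f t * g t)) in *.
  assert (Hc := is_RInt_minus _ _ _ _ _ _ (is_RInt_scal _ _ _ (f m) _ (RInt_correct _ _ _ Eg))
                   (RInt_correct _ _ _ Efg)).
  set (c0 := (3 * A + B) * h / 4). set (c1 := - A). set (c2 := (A - B) / (4 * h)).
  assert (J0 := IntL a al (a + e) m Hal ltac:(lra) ltac:(unfold m, h in *; lra)).
  assert (J1 := IntL a (al + 1) (a + e) m ltac:(lra) ltac:(lra) ltac:(unfold m, h in *; lra)).
  assert (J2 := IntL a (al + 2) (a + e) m ltac:(lra) ltac:(lra) ltac:(unfold m, h in *; lra)).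
  assert (Js := is_RInt_scal _ _ _ K _ (is_RInt_plus _ _ _ _ _ _
                  (is_RInt_plus _ _ _ _ _ _ (is_RInt_scal _ _ _ c0 _ J0) (is_RInt_scal _ _ _ c1 _ J1))
                  (is_RInt_scal _ _ _ c2 _ J2))).
  eapply Rle_trans.
  apply (abs_is_RInt_le _ _ (a + e) m _ _ ltac:(unfold m, h in *; lra) Hc Js).
  - intros y Hy. simpl.
    change (Rabs (minus (scal (f m) (phig y)) (phifg y)) <=
      K * (c0 * Rpower (y - a) (al - 1) + c1 * Rpower (y - a) (al + 1 - 1) + c2 * Rpower (y - a) (al + 2 - 1))).
    unfold phig, phifg. change (minus (scal (f m) (Rpower (y - a) (al - 1) * g y)) (Rpower (y - a) (al - 1) * (f y * g y)))
      with (f m * (Rpower (y - a) (al - 1) * g y) - Rpower (y - a) (al - 1) * (f y * g y)).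
    rewrite Rpower_sh1, Rpower_sh2 by lra.
    set (w0 := Rpower (y - a) (al - 1)). assert (Hw0 : 0 < w0) by apply Rpower_pos.
    assert (HP := PBound a b f df A B y Hab Hf Hd ltac:(unfold m, h in *; lra)). fold m h in HP.
    assert (HKy := HK y ltac:(unfold m, h in *; lra)).
    replace (f m * (w0 * g y) - w0 * (f y * g y)) with (w0 * ((f m - f y) * g y)) by ring.
    replace (K * (c0 * w0 + c1 * (w0 * (y - a)) + c2 * (w0 * (y - a) * (y - a))))
      with (w0 * (Pf A B h a y * K)) by (unfold Pf, c0, c1, c2; ring).
    rewrite Rabs_mult, Rabs_mult, (Rabs_right w0) by lra.
    apply Rmult_le_compat_l; [lra|]. apply Rmult_le_compat; try apply Rabs_pos; auto.
  - right. change (K * (c0 * ((Rpower (m - a) al - Rpower (a + e - a) al) / al)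
        + c1 * ((Rpower (m - a) (al + 1) - Rpower (a + e - a) (al + 1)) / (al + 1))
        + c2 * ((Rpower (m - a) (al + 2) - Rpower (a + e - a) (al + 2)) / (al + 2)))
      = K * (FL al A B h h - FL al A B h e)).
    rewrite Hmh. replace (a + e - a) with e by ring. unfold FL, c0, c1, c2. field. lra.
Qed.


Lemma lim0_FL al A B h : 0 < al -> lim0 (fun e => FL al A B h e) 0.
Proof.
  intros Hal. unfold FL.
  replace 0 with (((3 * A + B) * h / 4) * (/ al * 0) + (- A) * (/ (al + 1) * 0)
    + ((A - B) / (4 * h)) * (/ (al + 2) * 0)) by ring.
  apply lim0_ext with (fun e => ((3 * A + B) * h / 4) * (/ al * Rpower e al) + (- A) * (/ (al + 1) * Rpower e (al + 1))
    + ((A - B) / (4 * h)) * (/ (al + 2) * Rpower e (al + 2))).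
  { intros e. unfold Rdiv. ring. }
  apply lim0_plus; [apply lim0_plus|]; apply lim0_scal; apply lim0_scal; apply lim0_pow; lra.
Qed.

Lemma r1 (x y z : R) : x * y + -1 * z = x * y - z. Proof. ring. Qed.
Lemma r2 (k x y : R) : k * x + - k * y = k * (x - y). Proof. ring. Qed.

Lemma HalfLemma al a b f df g G K A B :
  0 < al -> a < b ->
  (forall x, a <= x <= b -> derivable_pt_lim f x (df x)) ->
  (forall t, continuity_pt G t) ->
  (forall t, a <= t <= b -> g t = G t) ->
  (forall t, a <= t <= b -> Rabs (g t) <= K) ->
  (forall s, a <= s <= b -> Rabs (df s) <= ((b - s) * A + (s - a) * B) / (b - a)) ->
  exists Vg Vfg, is_RL_left_int al g ((a + b) / 2) a Vg /\
    is_RL_left_int al (fun t => f t * g t) ((a + b) / 2) a Vfg /\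
    Rabs (f ((a + b) / 2) * Vg - Vfg) <= K * FL al A B ((b - a) / 2) ((b - a) / 2).
Proof.
  intros Hal Hab Hf HG Hg HK Hd.
  assert (Hfc : forall t, continuity_pt (fun x => f (clamp a b x)) t).
  { apply clamp_cont. lra. apply cont_pt_on. intros x Hx. eapply dpl_cont. apply Hf; auto. }
  set (H2 := fun t => f (clamp a b t) * G t).
  assert (HH2 : forall t, continuity_pt H2 t) by (intros; apply cmult; auto).
  assert (Hg2 : forall t, a <= t <= (a + b) / 2 -> f t * g t = H2 t).
  { intros t Ht. unfold H2. rewrite clamp_id by lra. rewrite Hg by lra. auto. }
  assert (Hg1 : forall t, a <= t <= (a + b) / 2 -> g t = G t) by (intros; apply Hg; lra).
  assert (Ham : a < (a + b) / 2) by lra.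
  assert (Eg : forall e, 0 < e < (a + b) / 2 - a ->
     ex_RInt (fun t => Rpower (t - a) (al - 1) * g t) (a + e) ((a + b) / 2)).
  { intros e He. apply exL with G; auto; lra. }
  assert (Efg : forall e, 0 < e < (a + b) / 2 - a ->
     ex_RInt (fun t => Rpower (t - a) (al - 1) * (f t * g t)) (a + e) ((a + b) / 2)).
  { intros e He. apply exL with H2; auto; lra. }
  destruct (RLL_exists al a ((a + b) / 2) G g Hal Ham HG Hg1) as [Vg HVg].
  destruct (RLL_exists al a ((a + b) / 2) H2 (fun t => f t * g t) Hal Ham HH2 Hg2) as [Vfg HVfg].
  exists Vg, Vfg. split; [apply RLL_of_lim; auto|]. split; [apply RLL_of_lim; auto|].
  apply lim0_le with
    (p := fun e => f ((a + b) / 2) * RInt (fun t => Rpower (t - a) (al - 1) * g t) (a + e) ((a + b) / 2)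
        - RInt (fun t => Rpower (t - a) (al - 1) * (f t * g t)) (a + e) ((a + b) / 2))
    (q := fun e => K * (FL al A B ((b - a) / 2) ((b - a) / 2) - FL al A B ((b - a) / 2) e))
    (d0 := (b - a) / 2).
  - lra.
  - intros e He. apply TruncBound with df; auto.
    apply Eg; lra. apply Efg; lra.
  - replace (f ((a + b) / 2) * Vg - Vfg) with (f ((a + b) / 2) * Vg + (-1) * Vfg) by ring.
    eapply lim0_ext; [|apply lim0_plus; [apply lim0_scal; exact HVg | apply lim0_scal; exact HVfg]].
    intros e. apply r1.
  - replace (K * FL al A B ((b - a) / 2) ((b - a) / 2)) with
      (K * FL al A B ((b - a) / 2) ((b - a) / 2) + (- K) * 0) by ring.
    eapply lim0_ext; [|apply lim0_plus; [apply lim0_const | apply lim0_scal; apply lim0_FL; auto]].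
    intros e. apply r2. auto.
Qed.


Lemma nat_above y : exists n : nat, y <= INR n.
Proof.
  assert (Hp : 0 < / (Rabs y + 1)) by (apply Rinv_0_lt_compat; assert (0 <= Rabs y) by apply Rabs_pos; lra).
  destruct (archimed_cor1 _ Hp) as [N [HN HN0]]. exists N.
  destruct (Rle_dec y (INR N)) as [H|H]; auto. exfalso.
  assert (0 < INR N) by (apply lt_0_INR; lia).
  assert (INR N <= Rabs y + 1) by rabs.
  assert (/ (Rabs y + 1) <= / INR N) by (apply Rinv_le_contravar; lra). lra.
Qed.

Lemma tail_const y : exists C, 0 < C /\ forall t, 1 <= t -> Rpower t y * exp (- t) <= C.
Proof.
  destruct (nat_above y) as [k Hk].
  exists (INR (Factorial.fact (S k))). split. apply INR_fact_lt_0.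
  intros t Ht.
  assert (E1 : Rpower t y <= t ^ (S k)).
  { rewrite <- Rpower_pow by lra. apply Rle_Rpower; auto. rewrite S_INR. lra. }
  assert (E2 : t ^ (S k) / INR (Factorial.fact (S k)) <= exp t).
  { eapply Rle_trans; [|apply (exp_ge_taylor t (S k)); lra].
    rewrite tech5. assert (0 <= sum_f_R0 (fun k0 : nat => t ^ k0 / INR (Factorial.fact k0)) k).
    { apply cond_pos_sum. intros n. apply Rdiv_le_0_compat. apply pow_le; lra. apply INR_fact_lt_0. }
    lra. }
  assert (Hf := INR_fact_lt_0 (S k)).
  assert (He : 0 < exp (- t)) by apply exp_pos.
  assert (Ee : exp (- t) * exp t = 1) by (rewrite <- exp_plus; replace (- t + t) with 0 by ring; apply exp_0).
  assert (E3 : t ^ (S k) <= INR (Factorial.fact (S k)) * exp t).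
  { apply (Rmult_le_reg_r (/ INR (Factorial.fact (S k)))). apply Rinv_0_lt_compat; lra.
    replace (INR (Factorial.fact (S k)) * exp t * / INR (Factorial.fact (S k))) with (exp t) by (field; lra).
    exact E2. }
  assert (0 < Rpower t y) by apply Rpower_pos.
  apply Rle_trans with (t ^ (S k) * exp (- t)). apply Rmult_le_compat_r; lra.
  apply Rle_trans with (INR (Factorial.fact (S k)) * exp t * exp (- t)). apply Rmult_le_compat_r; lra.
  rewrite Rmult_assoc, (Rmult_comm (exp t)), Ee. lra.
Qed.

Definition phiG (x t : R) := Rpower t (x - 1) * exp (- t).

Lemma dpl_pow s t : 0 < t -> derivable_pt_lim (fun u => Rpower u s) t (s * Rpower t (s - 1)).
Proof. intros; apply derivable_pt_lim_power; auto. Qed.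

Lemma dpl_expm t : derivable_pt_lim (fun u => exp (- u)) t (- exp (- t)).
Proof.
  apply dpl_eq with (exp (- t) * (- 1)); [ring|].
  apply dpl_comp with (f := fun u => - u) (g := exp). apply dpl_opp, dpl_id. apply derivable_pt_lim_exp.
Qed.

Lemma cont_phiG x t : 0 < t -> continuity_pt (phiG x) t.
Proof.
  intros Ht. unfold phiG. apply cmult. eapply dpl_cont. apply dpl_pow; auto.
  eapply dpl_cont. apply dpl_expm.
Qed.

Lemma ex_phiG x u v : 0 < u -> u <= v -> ex_RInt (phiG x) u v.
Proof. intros. apply exRInt_cont; auto. intros; apply cont_phiG; lra. Qed.

Lemma phiG_pos x t : 0 <= phiG x t.
Proof. unfold phiG. assert (0 < Rpower t (x - 1)) by apply Rpower_pos. assert (0 < exp (- t)) by apply exp_pos. nra. Qed.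

Lemma RInt_split_R (f : R -> R) a b c : ex_RInt f a b -> ex_RInt f b c -> RInt f a c = RInt f a b + RInt f b c.
Proof. intros H1 H2. rewrite <- (RInt_Chasles f a b c H1 H2). reflexivity. Qed.

Lemma Gamma_exists x : 0 < x -> exists V, is_Gamma x V.
Proof.
  intros Hx.
  destruct (cauchy_lim (fun e => RInt (phiG x) e 1)) as [V1 HV1].
  { apply cauchy_of_bound with (/ x) x 1; auto. left; apply Rinv_0_lt_compat; auto. lra.
    intros e1 e2 He He2.
    rewrite (RInt_split_R (phiG x) e1 e2 1) by (apply ex_phiG; lra).
    assert (Hr : forall r1 r2 : R, r1 + r2 - r2 = r1) by (intros; ring). rewrite Hr.
    assert (J := IntL 0 x e1 e2 Hx ltac:(lra) ltac:(lra)).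
    eapply Rle_trans. apply (abs_is_RInt_le _ _ e1 e2 _ _ ltac:(lra) (RInt_correct _ _ _ (ex_phiG x e1 e2 ltac:(lra) ltac:(lra))) J).
    - intros t Ht. unfold phiG. rewrite Rminus_0_r. rewrite Rabs_right by (left; apply Rmult_lt_0_compat; [apply Rpower_pos|apply exp_pos]).
      assert (exp (- t) <= 1) by (rewrite <- exp_0; left; apply exp_increasing; lra).
      assert (0 < Rpower t (x - 1)) by apply Rpower_pos. nra.
    - rewrite !Rminus_0_r. assert (0 < Rpower e1 x) by apply Rpower_pos.
      unfold Rdiv. rewrite Rmult_comm. apply Rmult_le_compat_l. left; apply Rinv_0_lt_compat; auto. lra. }
  destruct (tail_const (x + 1)) as [C [HC HCb]].
  assert (Hpt : forall t, 1 <= t -> phiG x t <= C * / (t * t)).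
  { intros t Ht. unfold phiG.
    assert (E : Rpower t (x + 1) = Rpower t (x - 1) * t * t).
    { replace (x + 1) with ((x - 1) + 1 + 1) by ring. rewrite !Rpower_plus, Rpower_1; lra. }
    specialize (HCb t Ht). rewrite E in HCb.
    apply (Rmult_le_reg_r (t * t)). nra.
    replace (C * / (t * t) * (t * t)) with C by (field; lra). nra. }
  destruct (cauchy_lim (fun e => RInt (phiG x) 1 (/ e))) as [V2 HV2].
  { apply cauchy_of_bound with C 1 1; auto; try lra.
    intros e1 e2 He He2.
    assert (Hi : / e2 <= / e1) by (apply Rinv_le_contravar; lra).
    assert (Hi1 : 1 < / e2) by (rewrite <- Rinv_1; apply Rinv_lt_contravar; lra).
    rewrite (RInt_split_R (phiG x) 1 (/ e2) (/ e1)) by (apply ex_phiG; lra).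
    assert (Hr : forall r1 r2 : R, r1 + r2 - r1 = r2) by (intros; ring). rewrite Hr.
    assert (J : is_RInt (fun t => / (t * t)) (/ e2) (/ e1) ((- / / e1) - (- / / e2))).
    { apply is_RInt_derive' with (f := fun t => - / t).
      - intros t Ht. rewrite Rmin_left, Rmax_right in Ht by lra. apply is_derive_Reals. auto_derive. lra. field. lra.
      - intros t Ht. rewrite Rmin_left, Rmax_right in Ht by lra.
        eapply dpl_cont. apply is_derive_Reals. auto_derive. nra. reflexivity. }
    assert (Js := is_RInt_scal _ _ _ C _ J).
    eapply Rle_trans. apply (abs_is_RInt_le _ _ (/ e2) (/ e1) _ _ Hi (RInt_correct _ _ _ (ex_phiG x (/ e2) (/ e1) ltac:(lra) Hi)) Js).
    - intros t Ht. rewrite Rabs_right by (apply Rle_ge, phiG_pos). apply Hpt; lra.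
    - change (scal C (- / / e1 - - / / e2)) with (C * (- / / e1 - - / / e2)).
      rewrite !Rinv_inv, Rpower_1 by lra. nra. }
  exists (V1 + V2). intros eps He.
  destruct (HV1 (eps / 2)) as [d1 [Hd1 K1]]; [lra|].
  destruct (HV2 (eps / 2)) as [d2 [Hd2 K2]]; [lra|].
  exists (Rmin d1 1), (Rmax 1 (/ d2)). split. apply Rmin_pos; lra.
  intros e M He' HM.
  assert (A1 := Rmin_l d1 1). assert (A2 := Rmin_r d1 1).
  assert (A3 := Rmax_l 1 (/ d2)). assert (A4 := Rmax_r 1 (/ d2)).
  exists (RInt (phiG x) e M). split.
  - apply RInt_conv. apply (RInt_correct (V:=R_CompleteNormedModule)). apply ex_phiG; lra.
  - rewrite (RInt_split_R (phiG x) e 1 M) by (apply ex_phiG; lra).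
    specialize (K1 e ltac:(lra)).
    assert (HiM : 0 < / M < d2).
    { split. apply Rinv_0_lt_compat; lra. rewrite <- (Rinv_inv d2). apply Rinv_lt_contravar.
      apply Rmult_lt_0_compat; [apply Rinv_0_lt_compat|]; lra. lra. }
    specialize (K2 (/ M) HiM). rewrite Rinv_inv in K2. rabs.
Qed.


Lemma Gamma_unique x v1 v2 : is_Gamma x v1 -> is_Gamma x v2 -> v1 = v2.
Proof.
  intros H1 H2. destruct (Req_dec v1 v2) as [E|E]; auto. exfalso.
  assert (Hp : 0 < Rabs (v1 - v2) / 2) by (assert (0 < Rabs (v1 - v2)) by (apply Rabs_pos_lt; lra); lra).
  destruct (H1 _ Hp) as [d1 [M1 [Hd1 K1]]]. destruct (H2 _ Hp) as [d2 [M2 [Hd2 K2]]].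
  set (e := Rmin d1 d2 / 2). set (M := Rmax M1 M2 + 1).
  assert (A3 := Rmin_l d1 d2). assert (A4 := Rmin_r d1 d2).
  assert (A5 : 0 < Rmin d1 d2) by (apply Rmin_pos; auto).
  assert (A6 := Rmax_l M1 M2). assert (A7 := Rmax_r M1 M2).
  destruct (K1 e M ltac:(unfold e; lra) ltac:(unfold M; lra)) as [w1 [Hw1 L1]].
  destruct (K2 e M ltac:(unfold e; lra) ltac:(unfold M; lra)) as [w2 [Hw2 L2]].
  rewrite (Dis_RInt_unique _ _ _ _ _ Hw1 Hw2) in L1. rabs.
Qed.

Lemma Gamma_val x v : is_Gamma x v -> Gamma x = v.
Proof. intros H. unfold Gamma. apply Gamma_unique with x; auto. apply epsilon_spec. exists v; auto. Qed.

Lemma Gamma_pos x v : 0 < x -> is_Gamma x v -> 0 < v.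
Proof.
  intros Hx H.
  assert (Hc : 0 < RInt (phiG x) 1 2).
  { assert (E0 : RInt (fun _ => 0) 1 2 = 0).
    { rewrite RInt_const. apply Rmult_0_r. }
    assert (Hlt := RInt_lt (fun _ => 0) (phiG x) 1 2 ltac:(lra)).
    rewrite E0 in Hlt. apply Hlt.
    intros; apply continuity_pt_filterlim; apply cont_phiG; lra.
    intros; apply continuity_pt_filterlim; apply continuity_pt_const; intros u v'; reflexivity.
    intros t Ht. unfold phiG. apply Rmult_lt_0_compat. apply Rpower_pos. apply exp_pos. }
  set (c := RInt (phiG x) 1 2) in *.
  destruct (H (c / 2)) as [d [M0 [Hd K]]]. lra.
  set (e := Rmin d (1/2) / 2). set (M := Rmax M0 2 + 1).
  assert (A3 := Rmin_l d (1/2)). assert (A4 := Rmin_r d (1/2)).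
  assert (A5 : 0 < Rmin d (1/2)) by (apply Rmin_pos; lra).
  assert (A6 := Rmax_l M0 2). assert (A7 := Rmax_r M0 2).
  destruct (K e M ltac:(unfold e; lra) ltac:(unfold M; lra)) as [w [Hw L]].
  apply RInt_conv' in Hw. change (is_RInt (phiG x) e M w) in Hw.
  rewrite <- (is_RInt_unique _ _ _ _ Hw) in L.
  rewrite (RInt_split_R (phiG x) e 1 M) in L by (apply ex_phiG; unfold e, M in *; lra).
  rewrite (RInt_split_R (phiG x) 1 2 M) in L by (apply ex_phiG; unfold e, M in *; lra).
  fold c in L.
  assert (0 <= RInt (phiG x) e 1).
  { apply RInt_ge_0. unfold e; lra. apply ex_phiG; unfold e; lra. intros; apply phiG_pos. }
  assert (0 <= RInt (phiG x) 2 M).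
  { apply RInt_ge_0. unfold M; lra. apply ex_phiG; unfold M; lra. intros; apply phiG_pos. }
  rabs.
Qed.

Lemma Gamma_succ x V : 0 < x -> is_Gamma x V -> is_Gamma (x + 1) (x * V).
Proof.
  intros Hx H eps He.
  destruct (H (eps / (3 * (x + 1)))) as [d [M0 [Hd K]]]. apply Rdiv_lt_0_compat; lra.
  destruct (small_pow x (eps / 3) Hx ltac:(lra)) as [d3 [Hd3 K3]].
  destruct (tail_const (x + 1)) as [C [HC HCb]].
  exists (Rmin (Rmin d d3) 1), (Rmax (Rmax M0 1) (3 * C / eps)). split. repeat apply Rmin_pos; lra.
  intros e M He' HM.
  assert (A1 := Rmin_l d d3). assert (A2 := Rmin_r d d3).
  assert (A1' := Rmin_l (Rmin d d3) 1). assert (A2' := Rmin_r (Rmin d d3) 1).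
  assert (A3 := Rmax_l (Rmax M0 1) (3 * C / eps)). assert (A4 := Rmax_r (Rmax M0 1) (3 * C / eps)).
  assert (A5 := Rmax_l M0 1). assert (A6 := Rmax_r M0 1).
  destruct (K e M ltac:(lra) ltac:(lra)) as [w [Hw L]].
  apply RInt_conv' in Hw.
  set (G := fun t => - (Rpower t x * exp (- t))).
  set (dG := fun t => Rpower t x * exp (- t) - x * (Rpower t (x - 1) * exp (- t))).
  assert (JG : is_RInt dG e M (G M - G e)).
  { apply is_RInt_derive'.
    - intros t Ht. rewrite Rmin_left, Rmax_right in Ht by lra. unfold G, dG.
      apply dpl_eq with (- (x * Rpower t (x - 1) * exp (- t) + Rpower t x * (- exp (- t)))); [ring|].
      apply (dpl_opp (fun u => Rpower u x * exp (- u))). apply (dpl_mult (fun u => Rpower u x) (fun u => exp (- u))). apply dpl_pow; lra. apply dpl_expm.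
    - intros t Ht. rewrite Rmin_left, Rmax_right in Ht by lra. unfold dG.
      apply continuity_pt_minus. apply cmult. eapply dpl_cont; apply dpl_pow; lra.
      eapply dpl_cont; apply dpl_expm.
      apply continuity_pt_scal. apply cont_phiG. lra. }
  assert (J := is_RInt_plus _ _ _ _ _ _ JG (is_RInt_scal _ _ _ x _ Hw)).
  exists (G M - G e + x * w). split.
  - apply RInt_conv. eapply is_RInt_ext; [|exact J].
    intros t Ht. change (dG t + x * (Rpower t (x - 1) * exp (- t)) = Rpower t (x + 1 - 1) * exp (- t)).
    unfold dG. replace (x + 1 - 1) with x by ring. ring.
  - unfold G.
    assert (B1 : Rpower e x * exp (- e) < eps / 3).
    { specialize (K3 e ltac:(lra)). assert (exp (- e) <= 1) by (rewrite <- exp_0; left; apply exp_increasing; lra).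
      assert (0 < Rpower e x) by apply Rpower_pos. nra. }
    assert (B2 : Rpower M x * exp (- M) < eps / 3).
    { specialize (HCb M ltac:(lra)). rewrite Rpower_plus, Rpower_1 in HCb by lra.
      assert (0 < exp (- M)) by apply exp_pos. assert (0 < Rpower M x) by apply Rpower_pos.
      assert (HM2 : 3 * C / eps < M) by lra.
      assert (3 * C < M * eps) by (apply (Rmult_lt_compat_r eps) in HM2; [|lra]; unfold Rdiv in HM2;
        rewrite Rmult_assoc, Rinv_l, Rmult_1_r in HM2; lra).
      nra. }
    assert (B3 : x * Rabs (w - V) < eps / 3).
    { apply Rlt_le_trans with (x * (eps / (3 * (x + 1)))). apply Rmult_lt_compat_l; auto.
      apply (Rmult_le_reg_r (3 * (x + 1))). lra. field_simplify; nra. }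
    assert (0 < Rpower e x * exp (- e)) by (apply Rmult_lt_0_compat; [apply Rpower_pos|apply exp_pos]).
    assert (0 < Rpower M x * exp (- M)) by (apply Rmult_lt_0_compat; [apply Rpower_pos|apply exp_pos]).
    replace (- (Rpower M x * exp (- M)) - - (Rpower e x * exp (- e)) + x * w - x * V)
      with (- (Rpower M x * exp (- M)) + (Rpower e x * exp (- e)) + x * (w - V)) by ring.
    assert (Rabs (x * (w - V)) = x * Rabs (w - V)) by (rewrite Rabs_mult, Rabs_right; lra).
    rabs.
Qed.


Lemma FL_sum al A B h : 0 < al -> 0 < h ->
  FL al A B h h + FL al B A h h = (A + B) * Rpower h (al + 1) / (al * (al + 1)).
Proof.
  intros Hal Hh. unfold FL.
  assert (E1 : Rpower h (al + 1) = Rpower h al * h) by (rewrite Rpower_plus, Rpower_1; auto).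
  assert (E2 : Rpower h (al + 2) = Rpower h al * h * h).
  { replace (al + 2) with (al + 1 + 1) by ring. rewrite !Rpower_plus, Rpower_1; auto. }
  rewrite E2, E1. field. lra.
Qed.

Theorem theorem2p4 (I : R -> Prop) (f df g : R -> R) (a b al : R) :
  is_interval I ->
  (forall x, interior I x -> derivable_pt_lim f x (df x)) ->
  interior I a -> interior I b -> a < b ->
  Defs.continuous_on g a b ->
  0 < al ->
  convex_on (fun x => Rabs (df x)) a b ->
  let m := (a + b) / 2 in
  Rabs (f m * (RL_left al g m a + RL_right al g m b)
        - (RL_left al (fun t => f t * g t) m a + RL_right al (fun t => f t * g t) m b))
  <= Rpower (b - a) (al + 1) * sup_norm g a b
       / (Rpower 2 (al + 1) * (al + 1) * Gamma (al + 1))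
       * (Rabs (df a) + Rabs (df b)).
Proof.
  intros HI Hder Ha Hb Hab Hg Hal Hconv m.
  assert (Hf : forall x, a <= x <= b -> derivable_pt_lim f x (df x)).
  { intros x Hx. apply Hder. apply interior_between with a b; auto. }
  set (A := Rabs (df a)). set (B := Rabs (df b)).
  assert (Hd : forall s, a <= s <= b -> Rabs (df s) <= ((b - s) * A + (s - a) * B) / (b - a)).
  { intros s Hs. assert (H := Hconv a b ((b - s) / (b - a)) ltac:(lra) ltac:(lra)).
    assert (0 <= (b - s) / (b - a) <= 1).
    { split. apply Rdiv_le_0_compat; lra. apply (Rmult_le_reg_r (b - a)). lra.
      unfold Rdiv. rewrite Rmult_assoc, Rinv_l; lra. }
    specialize (H H0). cbv beta in H.
    replace ((b - s) / (b - a) * a + (1 - (b - s) / (b - a)) * b) with s in H by (field; lra).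
    eapply Rle_trans. exact H. right. fold A B. field. lra. }
  set (G := fun t => g (clamp a b t)).
  assert (HG : forall t, continuity_pt G t) by (apply clamp_cont; auto; lra).
  assert (Hgg : forall t, a <= t <= b -> g t = G t) by (intros; unfold G; rewrite clamp_id; auto).
  set (K := sup_norm g a b).
  assert (HK : forall t, a <= t <= b -> Rabs (g t) <= K) by (apply sup_norm_bound with G; auto; lra).
  assert (HK0 : 0 <= K) by (apply Rle_trans with (Rabs (g a)); [apply Rabs_pos| apply HK; lra]).
  destruct (HalfLemma al a b f df g G K A B Hal Hab Hf HG Hgg HK Hd) as [Vg [Vfg [HL1 [HL2 HLb]]]].
  destruct (HalfLemma al a b (fun t => f (a + b - t)) (fun t => - df (a + b - t)) (fun t => g (a + b - t))
      (fun t => G (a + b - t)) K B A Hal Hab) as [Wg [Wfg [HR1 [HR2 HRb]]]].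
  { intros x Hx. apply dpl_eq with (df (a + b - x) * (0 - 1)); [ring|].
    apply dpl_comp with (f := fun t => a + b - t) (g := f).
    apply dpl_minus; [apply dpl_const|apply dpl_id]. apply Hf; lra. }
  { intros t. apply (continuity_pt_comp (fun t => a + b - t) G). eapply dpl_cont.
    apply dpl_minus; [apply dpl_const|apply dpl_id]. auto. }
  { intros t Ht. apply Hgg. lra. }
  { intros t Ht. apply HK. lra. }
  { intros s Hs. rewrite Rabs_Ropp. eapply Rle_trans. apply Hd. lra. right. field. lra. }
  replace (a + b - (a + b) / 2) with ((a + b) / 2) in HRb by field.
  assert (HR1' := refl_RL al g a b Wg Hab HR1).
  assert (HR2' := refl_RL al (fun t => f t * g t) a b Wfg Hab HR2).
  fold m in HL1, HL2, HLb, HRb, HR1', HR2'.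
  rewrite (RL_left_val _ _ _ _ _ HL1), (RL_left_val _ _ _ _ _ HL2),
    (RL_right_val _ _ _ _ _ HR1'), (RL_right_val _ _ _ _ _ HR2').
  destruct (Gamma_exists al Hal) as [V HV].
  assert (HV0 := Gamma_pos al V Hal HV).
  rewrite (Gamma_val _ _ HV), (Gamma_val _ _ (Gamma_succ al V Hal HV)).
  set (h := (b - a) / 2) in *. assert (Hh : 0 < h) by (unfold h; lra).
  assert (Hpw : Rpower (b - a) (al + 1) = Rpower h (al + 1) * Rpower 2 (al + 1)).
  { rewrite Rpower_mult_distr by lra. unfold h. f_equal. field. }
  assert (P1 : 0 < Rpower 2 (al + 1)) by apply Rpower_pos.
  assert (P2 : 0 < Rpower h (al + 1)) by apply Rpower_pos.
  replace (f m * (/ V * Vg + / V * Wg) - (/ V * Vfg + / V * Wfg))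
    with (/ V * ((f m * Vg - Vfg) + (f m * Wg - Wfg))) by ring.
  rewrite Rabs_mult, (Rabs_right (/ V)) by (left; apply Rinv_0_lt_compat; lra).
  apply Rle_trans with (/ V * (K * FL al A B h h + K * FL al B A h h)).
  { apply Rmult_le_compat_l. left; apply Rinv_0_lt_compat; lra.
    eapply Rle_trans. apply Rabs_triang. lra. }
  right. rewrite <- Rmult_plus_distr_l, FL_sum, Hpw by lra. field. lra.
Qed.
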